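(* For any temporal graph $\mathcal G=(V,E,\lambda)$ with lifetime $T_{\max}$ and any parameters $\delta,k\in\mathbb N^+$, the witness complexity of $\mathcal G$ is at most $|E|$.
   Context: A temporal graph $\mathcal G=(V,E,\lambda)$ with lifetime $T_{\max}$ consists of a finite undirected static graph $(V,E)$ and a labeling $\lambda:E\to\{1,\dots,T_{\max}\}$; edge $e$ is present only at time $\lambda(e)$. Infection model with parameter $\delta$: a set of at most $k$ seed infections $S\subseteq V\times[0,T_{\max}]$ is given; a seed $(u,t)$ makes $u$ infected at time $t$; otherwise a susceptible node $u$ becomes infected at time $t$ iff some neighbour $v$ infectious at time $t$ has $\lambda(uv)=t$ (exactly one infector recorded if several exist). A node infected at time $t$ is infectious at times $t+1,\dots,t+\delta$ and resistant afterwards. The infection log records triples $(u,v,t)$ ($u$ infected $v$ at time $t$). A witnessing schedule of length $a$ for $\mathcal G$ is a sequence $S_1,\dots,S_a$ of seed sets of size at most $k$ such that after performing these rounds all labels of $\mathcal G$ are uniquely determined (among labelings of the known static graph) by the infection logs; the witness complexity is the length of a shortest witnessing schedule. *)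

(* Defs.v *)
From mathcomp Require Import all_boot.
Unset Printing Implicit Defensive.

(* A temporal graph on a finite vertex type V: edges are 2-element subsets,
   labels lam : {set V} -> nat (only the values on edges matter). *)
Definition simple_edges (V : finType) (E : {set {set V}}) : Prop :=
  forall A, A \in E -> #|A| = 2.

Definition temporal_labeling (V : finType) (E : {set {set V}}) (Tmax : nat)
  (lam : {set V} -> nat) : Prop :=
  forall A, A \in E -> 1 <= lam A <= Tmax.

Definition adj (V : finType) (E : {set {set V}}) (u v : V) : bool :=
  [set u; v] \in E.

Definition seeded (V : finType) (Tmax : nat) (S : {set V * 'I_Tmax.+1})
  (u : V) (t : nat) : Prop :=
  exists i : 'I_Tmax.+1, (u, i) \in S /\ nat_of_ord i = t.

(* u would be infected at time t (if still susceptible): seeded at t, or some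
   neighbour v infected at time s (hence infectious at s+1..s+delta) with
   lam(uv) = t. *)
Definition trigger (V : finType) (E : {set {set V}}) (Tmax delta : nat)
  (lam : {set V} -> nat) (S : {set V * 'I_Tmax.+1}) (it : V -> option nat)
  (u : V) (t : nat) : Prop :=
  seeded V Tmax S u t \/
  exists v s, adj V E u v /\ it v = Some s /\ s < t <= s + delta /\ lam [set u; v] = t.

(* it u = infection time of u (None = never infected): the first trigger time *)
Definition valid_times (V : finType) (E : {set {set V}}) (Tmax delta : nat)
  (lam : {set V} -> nat) (S : {set V * 'I_Tmax.+1}) (it : V -> option nat) : Prop :=
  forall u t, it u = Some t <->
    (trigger V E Tmax delta lam S it u t /\ forall t', t' < t -> ~ trigger V E Tmax delta lam S it u t').

(* par u = recorded infector of u (None for seeds / never infected);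
   exactly one infector recorded, chosen arbitrarily among the possible ones *)
Definition valid_infectors (V : finType) (E : {set {set V}}) (Tmax delta : nat)
  (lam : {set V} -> nat) (S : {set V * 'I_Tmax.+1}) (it : V -> option nat)
  (par : V -> option V) : Prop :=
  forall u, match par u with
  | None => forall t, it u = Some t -> seeded V Tmax S u t
  | Some v => exists t s, it u = Some t /\ ~ seeded V Tmax S u t /\ adj V E u v /\
               it v = Some s /\ s < t <= s + delta /\ lam [set u; v] = t
  end.

Definition infection_log (V : finType) (it : V -> option nat) (par : V -> option V)
  (v u : V) (t : nat) : Prop :=
  par u = Some v /\ it u = Some t.

Definition possible_log (V : finType) (E : {set {set V}}) (Tmax delta : nat)
  (lam : {set V} -> nat) (S : {set V * 'I_Tmax.+1}) (L : V -> V -> nat -> Prop) : Prop :=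
  exists it par, valid_times V E Tmax delta lam S it /\ valid_infectors V E Tmax delta lam S it par /\
    forall v u t, L v u t <-> infection_log V it par v u t.

Definition witnessing_schedule (V : finType) (E : {set {set V}}) (Tmax delta k : nat)
  (lam : {set V} -> nat) (sched : seq {set V * 'I_Tmax.+1}) : Prop :=
  (forall S, S \in sched -> #|S| <= k) /\
  forall lam', temporal_labeling V E Tmax lam' ->
  forall Ls : nat -> V -> V -> nat -> Prop,
    (forall i, i < size sched -> possible_log V E Tmax delta lam (nth set0 sched i) (Ls i)) ->
    (forall i, i < size sched -> possible_log V E Tmax delta lam' (nth set0 sched i) (Ls i)) ->
    forall A, A \in E -> lam' A = lam A.

Definition witness_complexity_le (V : finType) (E : {set {set V}}) (Tmax delta k : nat)
  (lam : {set V} -> nat) (m : nat) : Prop :=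
  exists sched, witnessing_schedule V E Tmax delta k lam sched /\ size sched <= m.

(* Main.v *)
Require Import Defs.
From mathcomp Require Import all_boot.
From mathcomp Require Import zify.

Lemma seeded1 (V : finType) Tmax (u w : V) (i0 : 'I_Tmax.+1) t :
  seeded V Tmax [set (u, i0)] w t <-> (w = u /\ t = nat_of_ord i0).
Proof.
split.
- by move=> [i [/set1P [-> ->] <-]].
- by move=> [-> ->]; exists i0; rewrite set11.
Qed.

Lemma core (V : finType) (E : {set {set V}}) Tmax delta (lam : {set V} -> nat) (u v : V) (i0 : 'I_Tmax.+1) (it : V -> option nat) (par : V -> option V) :
  0 < delta -> u != v -> [set u; v] \in E -> lam [set u;v] = (nat_of_ord i0).+1 ->
  valid_times V E Tmax delta lam [set (u,i0)] it ->
  valid_infectors V E Tmax delta lam [set (u,i0)] it par ->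
  par v = Some u /\ it v = Some (lam [set u; v]).
Proof.
move=> dpos uv Ein lamE vt vi.
set t0 := nat_of_ord i0.
have C1 : forall t w, it w = Some t -> (w = u /\ t = t0) \/ t0 < t.
  elim/ltn_ind=> t IH w /vt [[/seeded1 H|[x [s [_ [hx [hs _]]]]]] _].
    by left.
  right; have hlt : s < t by case/andP: hs.
  case: (IH s hlt x hx) => [[_ h]|h]; lia.
have C2 : it u = Some t0.
  apply/vt; split; first by left; apply/seeded1.
  move=> t' lt [/seeded1 [_ h]|[x [s [_ [hx [hs _]]]]]]; first lia.
  case: (C1 _ _ hx) => [[_ h]|h]; case/andP: hs => h1 _; lia.
have adjvu : adj V E v u by rewrite /adj setUC.
have C3 : it v = Some (lam [set u; v]).
  apply/vt; split.
    right; exists u, t0; split=> //; split=> //; split; last by rewrite setUC.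
    rewrite lamE; apply/andP; split=> //; lia.
  move=> t' lt [/seeded1 [h _]|[x [s [_ [hx [hs hl]]]]]].
    by move: uv; rewrite h eqxx.
  case: (C1 _ _ hx) => [[hxu hst]|h].
    move: hl; rewrite hxu setUC => hl; lia.
  case/andP: hs => h1 _; lia.
split=> //.
move: (vi v); case: (par v) => [x|].
  move=> [t [s [ht [_ [_ [hx [hs _]]]]]]].
  rewrite C3 in ht; case: ht => ht.
  case: (C1 _ _ hx) => [[-> _]//|h].
  case/andP: hs => h1 _; lia.
move=> /(_ _ C3) /seeded1 [h _]; by move: uv; rewrite h eqxx.
Qed.

Lemma two_elems (V : finType) (A : {set V}) u : #|A| = 2 -> u \in A ->
  exists v, u != v /\ A = [set u; v].
Proof.
move=> hA hu.
have : #|A :\ u| == 1 by apply/eqP; move: hA; rewrite (cardsD1 u A) hu /=; lia.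
case/cards1P => v hv.
exists v; split.
  apply/negP => /eqP e; have : v \in A :\ u by rewrite hv set11.
  by rewrite -e setD11.
by rewrite -hv setD1K.
Qed.

Definition seed (V : finType) Tmax (lam : {set V} -> nat) (A : {set V}) : {set V * 'I_Tmax.+1} :=
  match [pick x in A] with
  | Some x => [set (x, inord (lam A).-1)]
  | None => set0
  end.

Theorem mainTheorem12 (V : finType) (E : {set {set V}}) (Tmax : nat)
  (lam : {set V} -> nat) (delta k : nat) :
  simple_edges V E -> temporal_labeling V E Tmax lam -> 0 < delta -> 0 < k ->
  witness_complexity_le V E Tmax delta k lam #|E|.
Proof.
move=> hs hl dpos kpos.
exists [seq seed V Tmax lam A | A <- enum E]; split; last by rewrite size_map -cardE.
split.
  move=> S /mapP [A _ ->]; rewrite /seed; case: pickP => [x _|_].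
    by rewrite cards1.
  by rewrite cards0.
move=> lam' hl' Ls Hlam Hlam' A AE.
have AE' : A \in enum E by rewrite mem_enum.
set i := index A (enum E).
have ilt : i < size [seq seed V Tmax lam A | A <- enum E] by rewrite size_map index_mem.
have hn : nth set0 [seq seed V Tmax lam A | A <- enum E] i = seed V Tmax lam A.
  by rewrite (nth_map set0) ?nth_index // -(size_map (seed V Tmax lam)).
move: (Hlam i ilt) (Hlam' i ilt); rewrite hn /seed.
case: pickP => [u hu|/(_ _) hn0]; last first.
  have h0 : #|A| = 0 by apply/eqP; rewrite cards_eq0; apply/eqP/setP=> x; rewrite hn0 inE.
  by move: (hs A AE); rewrite h0.
have [v [uv eA]] := two_elems _ _ _ (hs A AE) hu.
move: (hl A AE) => /andP [l1 l2].
set i0 := (inord (lam A).-1 : 'I_Tmax.+1).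
have hi0 : lam [set u; v] = (nat_of_ord i0).+1.
  rewrite /i0 inordK -?eA; lia.
move=> [it [par [vt [vi hL]]]] [it' [par' [vt' [vi' hL']]]].
rewrite eA in AE.
have [p1 p2] := core _ _ _ _ _ _ _ _ _ _ dpos uv AE hi0 vt vi.
have : Ls i u v (lam [set u; v]) by apply/hL.
move=> /hL' [q1 q2].
move: (vi' v); rewrite q1 => [[t [s [ht [_ [_ [_ [_ hlt]]]]]]]].
rewrite q2 in ht; case: ht => ht.
by rewrite eA ht -hlt setUC.
Qed.
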